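(* Let $A,B,C$ be the observer canonical realization (described in the context) of a plant $b(s)/a(s)$ that is stable (i.e. $A$ is Hurwitz) and has positive DC gain. Then the first exit time $\tau_+(\xi)$ is finite for every $\xi\in\mathbb{R}^n$.
   Context: The plant transfer function is $\frac{b(s)}{a(s)}=\frac{b_{n-1}s^{n-1}+\dots+b_0}{s^n+a_{n-1}s^{n-1}+\dots+a_0}$ with real coefficients. Its observer canonical realization is: $A$ is the $n\times n$ matrix with $A_{i+1,i}=1$ for $i=1,\dots,n-1$, last column $(-a_0,-a_1,\dots,-a_{n-1})^T$, and all other entries zero; $B=(b_0,b_1,\dots,b_{n-1})^T$; $C=(0,\dots,0,1)$. The plant is stable if $A$ is Hurwitz; its DC gain is $b_0/a_0$. The first exit time from positive sign is $\tau_+(\xi)=\inf\{t>0: Cx(t)<0\}$, where $x(\cdot)$ solves $\dot x=Ax-B$, $x(0)=\xi$. *)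

(* Defs.v *)
From HB Require Import structures.
From mathcomp Require Import all_boot all_order all_algebra.
From mathcomp Require Import complex.
From mathcomp Require Import all_classical all_reals all_analysis.
Set Implicit Arguments.
Unset Strict Implicit.
Unset Printing Implicit Defensive.
Import Order.TTheory GRing.Theory Num.Theory.
Local Open Scope ring_scope.

(* Observer canonical realization of b(s)/a(s) with deg a = n.+1:
   a i = a_i, b i = b_i for i = 0..n. Indices are 0-based. *)
Definition obs_A (R : realType) (n : nat) (a : 'I_n.+1 -> R) : 'M[R]_n.+1 :=
  \matrix_(i, j) (if j == ord_max then - a i
                  else if (i == j.+1 :> nat) then 1 else 0).

Definition obs_B (R : realType) (n : nat) (b : 'I_n.+1 -> R) : 'cV[R]_n.+1 :=
  \col_i b i.

Definition obs_C (R : realType) (n : nat) : 'rV[R]_n.+1 :=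
  \row_j (if j == ord_max then 1 else 0).

Definition hurwitz (R : realType) (n : nat) (A : 'M[R]_n.+1) : Prop :=
  forall z : R[i], eigenvalue (map_mx (real_complex R) A) z -> complex.Re z < 0.

Definition is_solution (R : realType) (n : nat) (A : 'M[R]_n.+1)
    (B : 'cV[R]_n.+1) (x : R -> 'cV[R]_n.+1) : Prop :=
  forall (t : R) (k : 'I_n.+1),
    is_derive t 1 (fun s => x s k 0) ((A *m x t - B) k 0).

(* Main.v *)
From HB Require Import structures.
From mathcomp Require Import all_boot all_order all_algebra.
From mathcomp Require Import complex.
From mathcomp Require Import all_classical all_reals all_analysis.
From mathcomp.algebra_tactics Require Import ring lra.
Import Order.TTheory GRing.Theory Num.Theory.
Local Open Scope ring_scope.
From mathcomp Require Import zify.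
Require Import Defs.
Lemma obsA_mul (R : realType) n (a : 'I_n.+1 -> R) (v : 'cV[R]_n.+1) (k : 'I_n.+1) :
 (obs_A a *m v) k 0 = (if (k : nat) is i.+1 then v (inord i) 0 else 0) - a k * v ord_max 0.
Proof.
rewrite mxE big_ord_recr /= !mxE eqxx mulNr; congr (_ - _).
have wne : forall j : 'I_n, (widen_ord (leqnSn n) j == ord_max) = false.
  by move=> j; apply/negbTE; rewrite -val_eqE /= neq_ltn ltn_ord.
under eq_bigr => j _ do rewrite !mxE wne.

case: k => [[|i] Hi] /=.
  by rewrite big1 // => j _; rewrite mul0r.
have Hi' : (i < n)%N by [].
rewrite (bigD1 (Ordinal Hi')) //= eqxx mul1r big1 ?addr0.
  have -> : inord i = widen_ord (leqnSn n) (Ordinal Hi') :> 'I_n.+1.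
    by apply/val_inj; rewrite /= inordK // ltnW.
  by [].
move=> j /negPf jne; rewrite eqSS.
have -> : (i == j) = false by rewrite -val_eqE /= in jne; rewrite eq_sym jne.
by rewrite mul0r.
Qed.

Lemma obsC_mul (R : realType) n (v : 'cV[R]_n.+1) :
  (obs_C R n *m v) 0 0 = v ord_max 0.
Proof.
rewrite mxE (bigD1 ord_max) //= !mxE eqxx mul1r big1 ?addr0 // => j /negPf jne.
by rewrite !mxE jne mul0r.
Qed.

Lemma decr_bound (R : realType) (f df : R -> R) (T e : R) :
  (forall t : R, is_derive t 1 f (df t)) -> (forall t, T <= t -> df t <= - e) ->
  forall t, T <= t -> f t <= f T - e * (t - T).
Proof.
move=> fd dle t; rewrite le_eqVlt => /orP [/eqP <-|Tt].
  by rewrite subrr mulr0 subr0.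
have cf := @derivable_within_continuous R R f `[T, t] (fun x _ => @ex_derive _ _ _ _ _ _ _ (fd x)).
have [c] := MVT Tt (fun x _ => fd x) cf.
rewrite in_itv /= => /andP [Tc ct] E.
have : df c <= - e by apply: dle; rewrite ltW.
have : 0 < t - T by rewrite subr_gt0.
move: E; set u := df c; set v := t - T => E hv hu.
have : u * v <= - e * v by rewrite ler_pM2r.
rewrite mulNr -E; set z := e * v; lra.
Qed.

Lemma to_minfty (R : realType) (f df : R -> R) (T e : R) :
  0 < e -> (forall t : R, is_derive t 1 f (df t)) -> (forall t, T <= t -> df t <= - e) ->
  forall M, exists T', forall t, T' <= t -> f t <= M.
Proof.
move=> e0 fd dle M; exists (T + `|f T - M| / e) => t Tt.
have T0 : T <= t.
  by apply: le_trans Tt; rewrite lerDl divr_ge0 // ltW.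
have := @decr_bound _ _ _ _ _ fd dle _ T0.
move: Tt; set q := `|f T - M| / e; set nn := `|f T - M| => Tt.
have h1 : e * q = nn by rewrite mulrC divfK // gt_eqF.
have h2 : f T - M <= nn by apply: ler_norm.
have h3 : q <= t - T by lra.
have h4 : e * q <= e * (t - T) by rewrite ler_pM2l.
move: h1 h4; set w1 := e * (t - T); set w2 := e * q.
lra.
Qed.

Lemma analytic (R : realType) n (a b : 'I_n.+1 -> R) (x : R -> 'cV[R]_n.+1) :
  (forall i, 0 <= a i) -> 0 < b ord0 -> is_solution (obs_A a) (obs_B b) x ->
  (forall t, 0 < t -> 0 <= x t ord_max 0) -> False.
Proof.
move=> a0 b0 sol ypos.
have dx : forall (k : 'I_n.+1) (t : R), is_derive t 1 (fun s => x s k 0)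
   ((if (k : nat) is i.+1 then x t (inord i) 0 else 0) - a k * x t ord_max 0 - b k).
  move=> k t; have := sol t k.
  by rewrite mxE obsA_mul !mxE.
have key : forall i, (i <= n)%N -> forall M, exists T, forall t, T <= t -> x t (inord i) 0 <= M.
  elim => [|i IH] Hi M.
    have E : (inord 0 : 'I_n.+1) = ord0 by apply/val_inj; rewrite /= inordK.
    rewrite E.
    apply: (@to_minfty _ _ _ 1 (b ord0) b0 (dx ord0)) => t t1.
    have : 0 <= a ord0 * x t ord_max 0.
      by rewrite mulr_ge0 // ypos // (lt_le_trans ltr01).
    move=> h /=; set w := a ord0 * _ in h *; lra.
  have [T0 HT0] := IH (ltnW Hi) (b (inord i.+1) - 1).
  have E : ((inord i.+1 : 'I_n.+1) : nat) = i.+1 by rewrite inordK.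
  apply: (@to_minfty _ _ _ (Num.max T0 1) 1 ltr01 (dx (inord i.+1))) => t t1.
  rewrite E.
  have t0 : T0 <= t by apply: le_trans t1; rewrite le_max lexx.
  have t1' : 1 <= t by apply: le_trans t1; rewrite le_max lexx orbT.
  have : 0 <= a (inord i.+1) * x t ord_max 0.
    by rewrite mulr_ge0 // ypos // (lt_le_trans ltr01).
  have := HT0 t t0.
  move=> h h' /=; set w := a (inord i.+1) * _ in h' *; lra.
have [T HT] := key n (leqnn n) (-1).
have E : (inord n : 'I_n.+1) = ord_max by apply/val_inj; rewrite /= inordK.
have t1 : T <= Num.max T 1 by rewrite le_max lexx.
have := HT _ t1; rewrite E.
have : 0 <= x (Num.max T 1) ord_max 0.
  by apply: ypos; apply: (lt_le_trans ltr01); rewrite le_max lexx orbT.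
lra.
Qed.
Lemma combine (R : realType) (q d : {poly R}) :
  (forall k, 0 <= q`_k) -> 0 < q`_0 -> (forall k, 0 <= d`_k) -> 0 < d`_0 ->
  (forall k, 0 <= (q * d)`_k) /\ 0 < (q * d)`_0.
Proof.
move=> hq hq0 hd hd0; split; last by rewrite coef0M mulr_gt0.
move=> k; rewrite coefM; apply: sumr_ge0 => i _; exact: mulr_ge0.
Qed.

Lemma conj_neq (R : realType) (z : R[i]) : complex.Im z != 0 -> z != conjc z.
Proof.
case: z => r s /= hs; apply/eqP => -[] /eqP.
by rewrite -addr_eq0 -mulr2n mulrn_eq0 /= (negPf hs).
Qed.

Lemma factor_exists (R : realType) (p : {poly R}) :
  (1 < size p)%N ->
  (forall z : R[i], root (map_poly (real_complex R) p) z -> complex.Re z < 0) ->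
  exists d q, [/\ p = q * d, d \is monic, (1 < size d)%N, (forall k, 0 <= d`_k) & 0 < d`_0].
Proof.
move=> sp hr.
have : size (map_poly (real_complex R) p) != 1%N by rewrite size_map_poly gtn_eqF.
move/closed_rootP => [z rz].
have rez := hr z rz.
have [imz|imz] := eqVneq (complex.Im z) 0.
  have zE : z = (complex.Re z)%:C%C by case: z imz {rez rz} => r s /= ->.
  have rp : root p (complex.Re z).
    by move: rz; rewrite zE /root horner_map fmorph_eq0.
  have /factor_theorem [q pq] := rp.
  exists ('X - (complex.Re z)%:P), q; split => //.
  - exact: monicXsubC.
  - by rewrite size_XsubC.
  - move=> [|[|k]]; rewrite coefB coefX coefC /=.
    + by rewrite sub0r oppr_ge0 ltW.
    + by rewrite subr0 ler01.
    + by rewrite subr0.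
  - by rewrite coefB coefX coefC /= sub0r oppr_gt0.
set c1 := - (complex.Re z *+ 2); set c0 := complex.Re z ^+ 2 + complex.Im z ^+ 2.
set d := 'X * ('X + c1%:P) + c0%:P.
have c1pos : 0 < c1 by rewrite /c1 oppr_gt0 pmulrn_llt0.
have c0pos : 0 < c0.
  rewrite /c0 ltr_wpDl ?sqr_ge0 //.
  by rewrite exprn_even_gt0 //.
have hd : forall k, d`_k = if k is 0%N then c0 else if k is 1%N then c1 else if k is 2%N then 1 else 0.
  move=> [|[|[|k]]]; rewrite /d coefD coefXM coefC /= ?coefD ?coefX ?coefC /=.
  - exact: add0r.
  - by rewrite [LHS]addr0; exact: add0r.
  - by rewrite [LHS]addr0; exact: addr0.
  - by rewrite [LHS]addr0; exact: addr0.
have dmon : d \is monic.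
  rewrite monicE lead_coefDl.
    by rewrite lead_coef_monicM ?monicX ?lead_coefXaddC.
  by rewrite size_Mmonic ?polyX_eq0 ?monicXaddC // size_polyX size_XaddC (leq_ltn_trans (size_polyC_leq1 _)).
have dsize : (1 < size d)%N.
  rewrite ltnNge; apply/negP => hs.
  have := nth_default 0 (leq_trans hs (isT : (1 <= 2)%N)).
  by move: (hd 2%N) => /= -> /eqP; rewrite oner_eq0.
have dvd : d %| p.
  rewrite -(dvdp_map (real_complex R)).
  have dcE : map_poly (real_complex R) d = ('X - z%:P) * ('X - (conjc z)%:P).
    rewrite /d rmorphD rmorphM /= map_polyX rmorphD /= map_polyX !map_polyC /=.
    have e1 : c1%:C%C = -(z + conjc z) by rewrite addcJ /c1 rmorphN rmorphMn mulr_natl.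
    have e0 : c0%:C%C = z * conjc z by rewrite -sqr_normc -add_Re2_Im2.
    rewrite e1 e0 polyCN polyCD polyCM; ring.
  have h1 : all (root (map_poly (real_complex R) p)) [:: z; conjc z].
    rewrite /= rz /= andbT -complex_root_conj -map_poly_comp.
    rewrite (@eq_map_poly _ _ _ (real_complex R)) // => c /=.
    exact: conjc_real.
  have h2 : uniq_roots [:: z; conjc z].
    rewrite uniq_rootsE /= inE andbT.
    exact: conj_neq.
  have [q' hq'] := uniq_roots_prod_XsubC h1 h2.
  rewrite dcE hq' !big_cons big_nil mulr1; exact: dvdp_mull.
exists d, (p %/ d); split => //.
- by rewrite divpK.
- by move=> k; rewrite hd; case: k => [|[|[|k]]] //; apply: ltW.
- by rewrite hd.
Qed.

Lemma hpoly (R : realType) m : forall p : {poly R}, (size p <= m)%N -> p \is monic ->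
  (forall z : R[i], root (map_poly (real_complex R) p) z -> complex.Re z < 0) ->
  (forall k, 0 <= p`_k) /\ 0 < p`_0.
Proof.
elim: m => [|m IH] p sp mp hr.
  by move: sp; rewrite leqn0 size_poly_eq0 (negPf (monic_neq0 mp)).
have [sp1|sp2] := leqP (size p) 1.
  have pE := size1_polyC sp1.
  have h : lead_coef p = 1 by apply/monicP.
  move: h; rewrite pE lead_coefC => h; rewrite h.
  split => [k|]; rewrite coefC; last by rewrite ltr01.
  by case: (k == 0%N); rewrite ?ler01 ?lexx.
have [d [q [pqd dmon dsz dpos d0pos]]] := @factor_exists _ _ sp2 hr.
have qmon : q \is monic by rewrite -(monicMr q dmon) -pqd.
have sq : (size q <= m)%N.
  move: sp; rewrite pqd size_Mmonic ?monic_neq0 //; lia.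
have hq : forall z : R[i], root (map_poly (real_complex R) q) z -> complex.Re z < 0.
  by move=> z rz; apply: hr; rewrite pqd rmorphM /= rootM rz.
have [IH1 IH2] := IH q sq qmon hq.
by rewrite pqd; apply: combine.
Qed.
Lemma eig (R : realType) n (a : 'I_n.+1 -> R) (z : R[i]) :
  z ^+ n.+1 + \sum_(i < n.+1) (a i)%:C%C * z ^+ i = 0 ->
  eigenvalue (map_mx (real_complex R) (obs_A a)) z.
Proof.
move=> hz; apply/eigenvalueP; exists (\row_(j < n.+1) z ^+ j); last first.
  by apply/eqP => /rowP /(_ ord0); rewrite !mxE expr0 => /eqP; rewrite oner_eq0.
apply/rowP => j; rewrite !mxE.
under eq_bigr => i _ do rewrite !mxE.
have [->|jne] := eqVneq j ord_max.
  under eq_bigr => i _ do rewrite rmorphN mulrN mulrC.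
  have hs : \sum_(i < n.+1) (a i)%:C%C * z ^+ i = - z ^+ n.+1.
    by apply/eqP; rewrite -addr_eq0 addrC hz.
  by rewrite sumrN hs opprK exprS.

have jn : (j.+1 < n.+1)%N by rewrite ltnS ltn_neqAle -ltnS ltn_ord andbT; move: jne; rewrite -val_eqE /=.
rewrite (bigD1 (Ordinal jn)) //= eqxx rmorph1 mulr1 big1 ?addr0 ?exprS //.
move=> i /negPf ine; rewrite -val_eqE /= in ine.
by rewrite ine rmorph0 mulr0.
Qed.

Lemma p_props (R : realType) n (a : 'I_n.+1 -> R) :
  let p := 'X^(n.+1) + \poly_(i < n.+1) a (inord i) in
  [/\ p \is monic, forall k : 'I_n.+1, p`_k = a k &
   forall z : R[i], root (map_poly (real_complex R) p) z ->
     z ^+ n.+1 + \sum_(i < n.+1) (a i)%:C%C * z ^+ i = 0].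
Proof.
move=> p; split.
- rewrite monicE lead_coefDl ?lead_coefXn // size_polyXn.
  exact: leq_ltn_trans (size_poly _ _) (ltnSn _).
- by move=> k; rewrite coefD coefXn coef_poly ltn_ord inord_val (ltn_eqF (ltn_ord k)) add0r.

- move=> z; rewrite /root rmorphD /= map_polyXn hornerD hornerXn.
  have -> : map_poly (real_complex R) (\poly_(i < n.+1) a (inord i)) =
            \poly_(i < n.+1) (a (inord i))%:C%C.
    apply/polyP => k; rewrite coef_map !coef_poly; case: ifP => //.

  have hs : \sum_(i < n.+1) (a (inord i))%:C%C * z ^+ i = \sum_(i < n.+1) (a i)%:C%C * z ^+ i.
    by apply: eq_bigr => i _; rewrite inord_val.
  by rewrite horner_poly hs => /eqP.
Qed.

Theorem mainTheorem1 (R : realType) (n : nat) (a b : 'I_n.+1 -> R) :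
  hurwitz (obs_A a) ->
  0 < b ord0 / a ord0 ->
  forall (xi : 'cV[R]_n.+1) (x : R -> 'cV[R]_n.+1),
    x 0 = xi ->
    is_solution (obs_A a) (obs_B b) x ->
    exists t : R, 0 < t /\ (obs_C R n *m x t) 0 0 < 0.
Proof.
move=> hH hdc xi x x0 sol.
have [pm pc pr] := @p_props R n a.
have [cpos c0pos] := @hpoly R _ _ (leqnn _) pm (fun z rz => hH z (@eig R n a z (pr z rz))).
have a_ge0 : forall i, 0 <= a i by move=> i; rewrite -pc.
have a0 : 0 < a ord0 by rewrite -pc.
have b0 : 0 < b ord0.
  by have := mulr_gt0 hdc a0; rewrite divfK ?gt_eqF.
case: (pselect (exists t : R, 0 < t /\ (obs_C R n *m x t) 0 0 < 0)) => // hn.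
exfalso; apply: (@analytic R n a b x a_ge0 b0 sol) => t t0.
rewrite leNgt; apply/negP => yt; apply: hn; exists t; split => //.
by rewrite obsC_mul.
Qed.
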